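(* Let $G=K_n$ with $n\ge2$, $F$ regular, $T=F^{-1}(1-1/n)$ and $p=T\cdot(1-1/n)^{n-1}$. Then for every equilibrium $\mathbf{T}'\in\mathcal{N}_{p\cdot\mathbf{1}}$, $$\mathcal{R}(p\cdot\mathbf{1},\mathbf{T}')\ge c\cdot\mathcal{R}(p\cdot\mathbf{1},T\cdot\mathbf{1})$$ for an absolute constant $c>0$ (one may take $c=1/2$).
   Context: Public-goods pricing game on the complete graph $K_n$: buyer $i$'s neighbours are all $j\neq i$. Values i.i.d. with cumulative distribution function $F$, $F(\infty)=1$. An equilibrium for $\mathbf{p}$ is $\mathbf{T}\in[0,\infty]^n$ (buyer $i$ purchases iff $v_i\ge T_i$) with $T_i=p_i/\prod_{j\neq i}F(T_j)$ for all $i$ (convention $c/0=\infty$); $\mathcal{N}_{\mathbf{p}}$ is the set of equilibria; $\mathcal{R}(\mathbf{p},\mathbf{T})=\sum_ip_i(1-F(T_i))$; $p\cdot\mathbf{1}$ is the uniform price vector. $F$ is regular: atomless, supported on an interval in $[0,\infty)$ with positive density $f$ there, and $\phi(x)=x-\frac{1-F(x)}{f(x)}$ non-decreasing. $F^{-1}(q)=\min\{x:F(x)=q\}$. *)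

(* Defs.v *)
From Stdlib Require Import Reals Lra Lia.
Open Scope R_scope.

(* Extended non-negative reals [0, +oo] for thresholds. *)
Inductive ext : Type := Fin (x : R) | Inf.

Definition Fext (F : R -> R) (t : ext) : R :=
  match t with Fin x => F x | Inf => 1 end.

Definition ext_div (c q : R) : ext :=
  if Req_EM_T q 0 then Inf else Fin (c / q).

Definition ext_nonneg (t : ext) : Prop :=
  match t with Fin x => 0 <= x | Inf => True end.

Fixpoint prod_except (g : nat -> R) (i m : nat) : R :=
  match m with
  | O => 1
  | S k => prod_except g i k * (if Nat.eqb k i then 1 else g k)
  end.

Fixpoint sum_lt (g : nat -> R) (m : nat) : R :=
  match m with
  | O => 0
  | S k => sum_lt g k + g k
  end.

(* Equilibria on the complete graph K_n for price vector p (buyers 0..n-1):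
   T_i = p_i / prod_{j <> i} F(T_j). *)
Definition equilibrium (F : R -> R) (n : nat) (p : nat -> R) (T : nat -> ext) : Prop :=
  forall i, (i < n)%nat ->
    ext_nonneg (T i) /\
    T i = ext_div (p i) (prod_except (fun j => Fext F (T j)) i n).

Definition revenue (F : R -> R) (n : nat) (p : nat -> R) (T : nat -> ext) : R :=
  sum_lt (fun i => p i * (1 - Fext F (T i))) n.

Definition is_interval (S : R -> Prop) : Prop :=
  forall x y z, S x -> S z -> x <= y -> y <= z -> S y.

Definition interior (S : R -> Prop) (x : R) : Prop :=
  exists d, 0 < d /\ forall y, Rabs (y - x) < d -> S y.

Definition is_cdf (F : R -> R) : Prop :=
  (forall x, 0 <= F x <= 1) /\
  (forall x y, x <= y -> F x <= F y) /\
  (forall eps, 0 < eps -> exists M, forall x, M <= x -> 1 - eps < F x) /\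
  (forall eps, 0 < eps -> exists M, forall x, x <= M -> F x < eps).

(* Regular distribution: atomless (continuous F), supported on an interval S
   of [0,oo) (F = 0 left of S, F = 1 right of S), with a positive density f on S
   (F' = f on the interior of S) and virtual value phi non-decreasing on S. *)
Definition regular (F : R -> R) : Prop :=
  is_cdf F /\
  (forall x, continuity_pt F x) /\
  exists (S : R -> Prop) (f : R -> R),
    is_interval S /\
    (exists x y, S x /\ S y /\ x < y) /\
    (forall x, S x -> 0 <= x) /\
    (forall x, (forall y, S y -> x < y) -> F x = 0) /\
    (forall x, (forall y, S y -> y < x) -> F x = 1) /\
    (forall x, S x -> 0 < f x) /\
    (forall x, interior S x -> derivable_pt_lim F x (f x)) /\
    (forall x y, S x -> S y -> x <= y ->
       x - (1 - F x) / f x <= y - (1 - F y) / f y).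

Definition is_Finv (F : R -> R) (q x : R) : Prop :=
  F x = q /\ forall y, F y = q -> x <= y.

(* Main.v *)
Require Import Defs.
From Stdlib Require Import Reals Lra Lia.
Open Scope R_scope.

Lemma bern (x : R) (k : nat) : 0 <= x -> 1 + INR k * x <= (1 + x) ^ k.
Proof.
  intro Hx. induction k as [|k IH]; [simpl; lra|].
  rewrite S_INR; simpl. assert (0 <= INR k) by apply pos_INR. nra.
Qed.

Lemma qpow_le (n : nat) : (2 <= n)%nat -> (1 - 1 / INR n) ^ (n - 1) <= 1/2.
Proof.
  intro Hn. set (m := (n - 1)%nat).
  assert (Hnm : INR n = INR m + 1).
  { unfold m. replace n with (S (n - 1)) at 1 by lia. rewrite S_INR. lra. }
  assert (Hm1 : 1 <= INR m). { apply (le_INR 1). unfold m; lia. }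
  assert (Hq : (1 - 1 / INR n) * (1 + 1 / INR m) = 1).
  { rewrite Hnm. field. lra. }
  assert (Hb := bern (1 / INR m) m).
  assert (Hb2 : 2 <= (1 + 1 / INR m) ^ m).
  { replace 2 with (1 + INR m * (1 / INR m)) by (field; lra).
    apply Hb. apply Rlt_le, Rdiv_lt_0_compat; lra. }
  assert (Hprod : (1 - 1 / INR n) ^ m * (1 + 1 / INR m) ^ m = 1).
  { rewrite <- Rpow_mult_distr, Hq. apply pow1. }
  assert (H0 : 0 <= (1 - 1 / INR n) ^ m).
  { apply pow_le. rewrite Hnm.
    assert (1 / (INR m + 1) <= 1).
    { apply (Rmult_le_reg_l (INR m + 1)); [lra|]. field_simplify; lra. } lra. }
  nra.
Qed.

Lemma prod_except_bound (g : nat -> R) (i m : nat) :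
  (forall j, (j < m)%nat -> 0 <= g j <= 1) ->
  0 <= prod_except g i m <= 1 /\
  1 - sum_lt (fun j => 1 - g j) m <= prod_except g i m.
Proof.
  induction m as [|k IH]; intro Hg; simpl; [lra|].
  destruct IH as [[H1 H2] H3]. { intros j Hj; apply Hg; lia. }
  assert (Hk := Hg k (Nat.lt_succ_diag_r k)).
  destruct (Nat.eqb k i); split; try split; nra.
Qed.

Lemma sum_lt_scale (c : R) (h : nat -> R) (m : nat) :
  sum_lt (fun i => c * h i) m = c * sum_lt h m.
Proof. induction m; simpl; [ring|]. rewrite IHm. ring. Qed.

Lemma sum_lt_const (c : R) (m : nat) : sum_lt (fun _ => c) m = INR m * c.
Proof. induction m; [simpl; ring|]. simpl sum_lt. rewrite IHm, S_INR. ring. Qed.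

Lemma sum_lt_ge (h : nat -> R) (c : R) (m : nat) :
  (forall j, (j < m)%nat -> c <= h j) -> INR m * c <= sum_lt h m.
Proof.
  induction m; intro H; [simpl; lra|]. simpl sum_lt.
  rewrite S_INR. assert (IH := IHm (fun j Hj => H j ltac:(lia))).
  assert (H' := H m ltac:(lia)). lra.
Qed.

Theorem lemma3p4 (n : nat) (F : R -> R) (T : R) :
  (2 <= n)%nat ->
  regular F ->
  is_Finv F (1 - 1 / INR n) T ->
  forall T' : nat -> ext,
    equilibrium F n (fun _ => T * (1 - 1 / INR n) ^ (n - 1)) T' ->
    revenue F n (fun _ => T * (1 - 1 / INR n) ^ (n - 1)) T'
      >= 1 / 2 * revenue F n (fun _ => T * (1 - 1 / INR n) ^ (n - 1)) (fun _ => Fin T).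
Proof.
  intros Hn Hreg [HFT _] T' Heq.
  destruct Hreg as [[Hcdf01 [Hmono _]] [_ [S [f [_ [[x0 [y0 [Sx0 _]]] [HS0 [HF0 _]]]]]]]].
  assert (HnR : 2 <= INR n) by (apply (le_INR 2); lia).
  set (q := 1 - 1 / INR n) in *.
  assert (Hq1 : INR n * (1 - q) = 1) by (unfold q; field; lra).
  assert (Hqpos : 0 < q).
  { unfold q. apply Rlt_0_minus. apply (Rmult_lt_reg_l (INR n)); [lra|].
    field_simplify; lra. }
  assert (HT : 0 <= T).
  { destruct (Rle_or_lt 0 T) as [h|h]; [exact h|].
    exfalso. rewrite HF0 in HFT; [lra|]. intros y Sy. specialize (HS0 y Sy). lra. }
  assert (Hqp := qpow_le n Hn). fold q in Hqp.
  assert (Hqp0 : 0 <= q ^ (n - 1)) by (apply pow_le; lra).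
  set (p := T * q ^ (n - 1)).
  assert (Hp0 : 0 <= p) by (unfold p; nra).
  assert (H2p : 2 * p <= T) by (unfold p; nra).
  unfold revenue. rewrite sum_lt_scale, sum_lt_scale, sum_lt_const. simpl Fext.
  rewrite HFT, Hq1.
  assert (HFe : forall t, 0 <= Fext F t <= 1).
  { intros [x|]; simpl; [apply Hcdf01|lra]. }
  set (s := sum_lt (fun i => 1 - Fext F (T' i)) n).
  cut (1/2 <= s). { intro. apply Rle_ge. nra. }
  destruct (Rle_or_lt (1/2) s) as [h|h]; [exact h|].
  exfalso.
  assert (Hle : forall i, (i < n)%nat -> 1 - q <= 1 - Fext F (T' i)).
  { intros i Hi. destruct (Heq i Hi) as [_ Hi'].
    destruct (prod_except_bound (fun j => Fext F (T' j)) i n) as [[Q0 Q1] Q2].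
    { intros; apply HFe. }
    fold s in Q2.
    set (Q := prod_except (fun j => Fext F (T' j)) i n) in *.
    assert (HQ : 1/2 < Q) by lra.
    rewrite Hi'. unfold ext_div.
    destruct (Req_EM_T Q 0) as [e|e]; [lra|]. simpl.
    assert (p / Q <= T).
    { apply Rle_trans with (2 * p); [|exact H2p].
      unfold Rdiv. replace (2 * p) with (p * 2) by ring. apply Rmult_le_compat_l; [lra|].
      replace 2 with (/ (1/2)) by field. apply Rinv_le_contravar; lra. }
    assert (F (p / Q) <= F T) by (apply Hmono; assumption). unfold p in H0. lra. }
  assert (Hs := sum_lt_ge _ _ n Hle). fold s in Hs. lra.
Qed.
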